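(* Let $1\le k<n$ and let $X$ be a fixed (non-random) real $n\times k$ matrix of full column rank $k$. Let $\mathbf{F}_2$ be the class of all distributions $F$ of the random vector $Y=X\beta+e$ in $\mathbb{R}^n$, where $\beta$ ranges over $\mathbb{R}^k$ and the distribution of the error vector $e$ ranges over all distributions on $\mathbb{R}^n$ with $E e'e<\infty$, $Ee=0$ and $Eee'=\sigma^2\Sigma$ for some $0<\sigma^2<\infty$ and some symmetric positive definite $n\times n$ matrix $\Sigma$. For $F\in\mathbf{F}_2$, let $\beta(F)$ denote the (unique) $\beta\in\mathbb{R}^k$ with $E_F Y = X\beta$. Suppose $\hat\beta:\mathbb{R}^n\to\mathbb{R}^k$ is a Borel-measurable function such that, for every $F\in\mathbf{F}_2$, $E_F\hat\beta(Y)$ exists and $E_F\hat\beta(Y)=\beta(F)$. Then $\hat\beta$ is linear, i.e., there is a $k\times n$ real matrix $A$ with $\hat\beta(y)=Ay$ for all $y\in\mathbb{R}^n$.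
   Context: $E_F$ denotes expectation when $Y$ has distribution $F$. Since $X$ has full column rank, $\beta(F)$ is uniquely determined by $F$. *)

(* Defs.v *)
From HB Require Import structures.
From mathcomp Require Import all_boot all_order all_algebra.
From mathcomp Require Import all_classical all_reals all_analysis.
Set Implicit Arguments. Unset Strict Implicit. Unset Printing Implicit Defensive.
Import Order.TTheory GRing.Theory Num.Theory.
Import numFieldNormedType.Exports.
Local Open Scope classical_set_scope.
Local Open Scope ring_scope.

Definition Rvec (R : realType) (n : nat) : measurableType _ :=
  g_sigma_algebraType (@open 'cV[R]_n).

Definition sym_posdef (R : realType) (n : nat) (S : 'M[R]_n) : Prop :=
  S^T = S /\ forall v : 'cV[R]_n, v != 0 -> 0 < (v^T *m S *m v) 0 0.

Definition admissible_error (R : realType) (n : nat)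
    (Pe : probability (Rvec R n) R) : Prop :=
  [/\ Pe.-integrable [set: Rvec R n] (fun e : Rvec R n => ((e^T *m e) 0 0)%:E),
      (forall i : 'I_n, (\int[Pe]_e (e i 0)%:E = 0)%E) &
      exists s2 : R, exists S : 'M[R]_n, [/\ 0 < s2, sym_posdef S &
        forall i j : 'I_n,
          (\int[Pe]_e (e i 0 * e j 0)%:E = (s2 * S i j)%:E)%E]].

(* Main.v *)
Require Import Defs.
From HB Require Import structures.
From mathcomp Require Import all_boot all_order all_algebra.
From mathcomp Require Import all_classical all_reals all_analysis measurable_realfun.
From mathcomp Require Import lra ring zify.
Import Order.TTheory GRing.Theory Num.Theory.
Import numFieldNormedType.Exports.
Local Open Scope classical_set_scope.
Local Open Scope ring_scope.

Lemma cont_meas (R : realType) (m : nat) (f : 'cV[R]_m -> R) :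
  continuous f -> measurable_fun [set: Rvec R m] (f : Rvec R m -> R).
Proof.
move=> /continuousP cf; apply: (measurability _ (measurable_realfun.RGenOpens.measurableE R)).
move=> _ [_ [a [b ->] <-]]; rewrite setTI.
apply: sub_sigma_algebra; exact/cf/interval_open.
Qed.

Lemma coord_meas (R : realType) (m : nat) (i : 'I_m) :
  measurable_fun [set: Rvec R m] (fun e : Rvec R m => e i 0).
Proof. exact: cont_meas (@coord_continuous R m 1 i 0). Qed.
Definition dmsum {R : realType} {n : nat} (w : nat -> R) (z : nat -> 'cV[R]_n)
  (N : nat) : {measure set (Rvec R n) -> \bar R} :=
  msum (fun k => mscale `|w k|%:nng (@dirac _ (Rvec R n) (z k) R)) N.

Definition dprob {R : realType} {n : nat} (w : nat -> R) (z : nat -> 'cV[R]_n)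
  (N : nat) : probability (Rvec R n) R :=
  mnormalize (dmsum w z N) (@dirac _ (Rvec R n) 0 R).

Lemma dmsum_ge0_int (R : realType) (n : nat) (w : nat -> R) (z : nat -> 'cV[R]_n)
  (N : nat) (f : Rvec R n -> \bar R) :
  measurable_fun setT f -> (forall x, (0 <= f x)%E) ->
  (\int[dmsum w z N]_x f x = \sum_(k < N) `|w k|%:E * f (z k))%E.
Proof.
move=> mf f0; rewrite ge0_integral_measure_sum//; apply: eq_bigr => k _.
rewrite ge0_integral_mscale//= integral_dirac// diracT mul1e //.
Qed.

Lemma dmsum_setT (R : realType) (n : nat) (w : nat -> R) (z : nat -> 'cV[R]_n)
  (N : nat) : dmsum w z N [set: Rvec R n] = (\sum_(k < N) `|w k|)%:E.
Proof.
rewrite /= /msum /mscale /= -sumEFin; apply: eq_bigr => k _.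
by rewrite /mscale /= /dirac indicT mule1.
Qed.

Lemma dprobE {R : realType} {n : nat} (w : nat -> R) (z : nat -> 'cV[R]_n) N :
  (forall k, 0 <= w k) -> \sum_(k < N) w k = 1 ->
  forall A, dprob w z N A = dmsum w z N A.
Proof.
move=> w0 w1 A; rewrite /dprob /=; unfold mnormalize.
rewrite dmsum_setT.
rewrite (eq_bigr (fun k : 'I_N => w k)); last by move=> k _; rewrite ger0_norm.
rewrite w1 /=.
by rewrite onee_eq0 /= invr1 mule1.
Qed.

Lemma maxr_sub {R : realType} (a : R) : Num.max a 0 - Num.max (- a) 0 = a.
Proof.
by case: (leP a 0) => h1; case: (leP (-a) 0) => h2; lra.
Qed.

Lemma dprob_int {R : realType} {n : nat} (w : nat -> R) (z : nat -> 'cV[R]_n) N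
  (g : Rvec R n -> R) :
  (forall k, 0 <= w k) -> \sum_(k < N) w k = 1 -> measurable_fun setT g ->
  (\int[dprob w z N]_x (g x)%:E = (\sum_(k < N) w k * g (z k))%:E)%E.
Proof.
move=> w0 w1 mg.
rewrite (eq_measure_integral (dmsum w z N)); last first.
  by move=> A _ _; exact: dprobE.
have mge : measurable_fun setT (fun x => (g x)%:E) by exact/measurable_EFinP.
rewrite integralE (@dmsum_ge0_int _ _ w z N _ (measurable_funepos mge)); last first.
  by move=> x; exact: funepos_ge0.
rewrite (@dmsum_ge0_int _ _ w z N _ (measurable_funeneg mge)); last first.
  by move=> x; exact: funeneg_ge0.
under eq_bigr do rewrite funeposE -EFin_max -EFinM.
under [X in (_ - X)%E]eq_bigr do rewrite funenegE -EFinN -EFin_max -EFinM.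
rewrite !sumEFin -EFinB -sumrB; congr (_%:E); apply: eq_bigr => k _.
by rewrite ger0_norm // -mulrBr maxr_sub.
Qed.
Lemma quadE {R : realType} {n : nat} (w : nat -> R) (z : nat -> 'cV[R]_n) N
  (v : 'cV[R]_n) :
  (v^T *m (\matrix_(i, j) \sum_(k < N) w k * (z k i 0 * z k j 0)) *m v) 0 0
  = \sum_(k < N) w k * (\sum_(i < n) v i 0 * z k i 0) ^+ 2.
Proof.
rewrite !mxE.
have -> : \sum_(k < N) w k * (\sum_(i < n) v i 0 * z k i 0) ^+ 2 =
  \sum_(k < N) \sum_(i < n) \sum_(j < n) w k * (v i 0 * z k i 0) * (v j 0 * z k j 0).
  apply: eq_bigr => k _; rewrite expr2 big_distrl /= mulr_sumr.
  apply: eq_bigr => i _; rewrite big_distrr /= mulr_sumr.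
  by apply: eq_bigr => j _; ring.
rewrite exchange_big /=.
under [RHS]eq_bigr do rewrite exchange_big /=.
rewrite [RHS]exchange_big /=.
apply: eq_bigr => j _; rewrite mxE big_distrl /=.
apply: eq_bigr => i _; rewrite !mxE big_distrr /= big_distrl /=.
by apply: eq_bigr => k _; ring.
Qed.

Lemma quad_meas {R : realType} {n : nat} :
  measurable_fun [set: Rvec R n] (fun e : Rvec R n => (e^T *m e) 0 0).
Proof.
have -> : (fun e : Rvec R n => (e^T *m e) 0 0) =
    (fun e => \sum_(i < n) e i 0 * e i 0).
  by apply/funext => e; rewrite !mxE; apply: eq_bigr => i _; rewrite mxE.
by apply: measurable_sum => i; apply: measurable_funM; exact: coord_meas.
Qed.

Lemma adm_dprob {R : realType} {n : nat} (w : nat -> R) (z : nat -> 'cV[R]_n) N :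
  (forall k, 0 <= w k) -> \sum_(k < N) w k = 1 ->
  (forall i : 'I_n, \sum_(k < N) w k * z k i 0 = 0) ->
  (forall v : 'cV[R]_n, v != 0 ->
     0 < \sum_(k < N) w k * (\sum_(i < n) v i 0 * z k i 0) ^+ 2) ->
  admissible_error (dprob w z N).
Proof.
move=> w0 w1 wm wq; split.
- apply/integrableP; split; first by apply/measurable_EFinP; exact: quad_meas.
  under eq_integral do rewrite abse_EFin.
  rewrite dprob_int //; first exact: ltry.
  apply: measurableT_comp; [exact: normr_measurable | exact: quad_meas].
- move=> i; rewrite dprob_int //; first by rewrite wm.
  exact: coord_meas.
- exists 1, (\matrix_(i, j) \sum_(k < N) w k * (z k i 0 * z k j 0)).
  split => //.
  + split; last by move=> v hv; rewrite quadE; exact: wq.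
    apply/matrixP => i j; rewrite !mxE; apply: eq_bigr => k _; by rewrite [z k j 0 * _]mulrC.
  + move=> i j; rewrite dprob_int //; first by rewrite mxE mul1r.
    by apply: measurable_funM; exact: coord_meas.
Qed.
Definition sp {R : ringType} {n : nat} (k : nat) : 'cV[R]_n :=
  \col_(i < n) ((i : nat) == k)%:R.

Definition zz {R : ringType} {n : nat} (z1 z2 z3 : 'cV[R]_n) (k : nat) : 'cV[R]_n :=
  if (k < n)%N then sp k else if (k < n + n)%N then - sp (k - n)
  else if k == (n + n)%N then z1 else if k == (n + n).+1 then z2 else z3.

Definition ww {R : ringType} (n : nat) (c a1 a2 a3 : R) (k : nat) : R :=
  if (k < n + n)%N then c else if k == (n + n)%N then a1
  else if k == (n + n).+1 then a2 else a3.

Lemma decomp {R : comRingType} {n : nat} (c a1 a2 a3 : R) (z1 z2 z3 : 'cV[R]_n)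
  (F : 'cV[R]_n -> R) :
  \sum_(k < (n + n).+3) ww n c a1 a2 a3 k * F (zz z1 z2 z3 k) =
  c * \sum_(i < n) (F (sp i) + F (- sp i)) + a1 * F z1 + a2 * F z2 + a3 * F z3.
Proof.
rewrite !big_ord_recr /= big_split_ord /=.
have w1 : forall i : 'I_n, ww n c a1 a2 a3 i = c.
  by move=> i; have h := ltn_ord i; rewrite /ww ifT //; lia.
have w2 : forall i : 'I_n, ww n c a1 a2 a3 (n + i) = c.
  by move=> i; have h := ltn_ord i; rewrite /ww ifT //; lia.
have z1e : forall i : 'I_n, zz z1 z2 z3 i = sp i.
  by move=> i; rewrite /zz ifT //.
have z2e : forall i : 'I_n, zz z1 z2 z3 (n + i) = - sp i.
  by move=> i; have h := ltn_ord i; rewrite /zz ifF ?ifT ?addKn //; lia.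
have w3 : ww n c a1 a2 a3 (n + n) = a1 by rewrite /ww ltnn eqxx.
have w4 : ww n c a1 a2 a3 (n + n).+1 = a2.
  rewrite /ww; do 2 (case: ifP => ?; first by exfalso; lia). by rewrite eqxx.
have w5 : ww n c a1 a2 a3 (n + n).+2 = a3.
  rewrite /ww; do 3 (case: ifP => ?; first by exfalso; lia). by [].
have z3e : zz z1 z2 z3 (n + n) = z1.
  rewrite /zz; do 2 (case: ifP => ?; first by exfalso; lia). by rewrite eqxx.
have z4e : zz z1 z2 z3 (n + n).+1 = z2.
  rewrite /zz; do 3 (case: ifP => ?; first by exfalso; lia). by rewrite eqxx.
have z5e : zz z1 z2 z3 (n + n).+2 = z3.
  rewrite /zz; do 4 (case: ifP => ?; first by exfalso; lia). by [].
rewrite w3 w4 w5 z3e z4e z5e.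
under eq_bigr do rewrite w1 z1e.
under [X in _ + X + _ + _ + _ = _]eq_bigr do rewrite w2 z2e.
by rewrite -!mulr_sumr -mulrDr big_split.
Qed.

Lemma sp_dot {R : comRingType} {n : nat} (v : 'cV[R]_n) (i : 'I_n) :
  \sum_(j < n) v j 0 * (sp i : 'cV[R]_n) j 0 = v i 0.
Proof.
rewrite (bigD1 i) //= mxE eqxx mulr1 big1 ?addr0 // => j hj.
by rewrite mxE (_ : ((j : nat) == i) = false) ?mulr0 //; apply/negbTE.
Qed.

Lemma sp_sum {R : comRingType} {n : nat} (y : 'cV[R]_n) :
  y = \sum_(i < n) y i 0 *: sp i.
Proof.
apply/matrixP => r s; rewrite (ord1 s) summxE.
rewrite (bigD1 r) //= !mxE eqxx mulr1 big1 ?addr0 // => j hj.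
by rewrite !mxE (_ : ((r : nat) == j) = false) ?mulr0 //; apply/negbTE; rewrite eq_sym.
Qed.

Lemma key {R : realType} {n : nat} (g : Rvec R n -> R) :
  measurable_fun setT g ->
  (forall P : probability (Rvec R n) R, admissible_error P ->
     (\int[P]_e (g e)%:E = 0)%E) ->
  (0 < n)%N ->
  forall (a1 a2 a3 : R) (z1 z2 z3 : 'cV[R]_n),
  0 <= a1 -> 0 <= a2 -> 0 <= a3 -> a1 + a2 + a3 < 1 ->
  a1 *: z1 + a2 *: z2 + a3 *: z3 = 0 ->
  (1 - a1 - a2 - a3) / (n + n)%:R * \sum_(i < n) (g (sp i) + g (- sp i))
  + a1 * g z1 + a2 * g z2 + a3 * g z3 = 0.
Proof.
move=> mg hg n0 a1 a2 a3 z1 z2 z3 h1 h2 h3 hs hm.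
set c := (1 - a1 - a2 - a3) / (n + n)%:R.
have nn0 : 0 < (n + n)%:R :> R by rewrite ltr0n; lia.
have c0 : 0 < c by rewrite /c divr_gt0 //; lra.
have w0 : forall k, 0 <= ww n c a1 a2 a3 k.
  by move=> k; rewrite /ww; do 3 (case: ifP => _; first by lra); lra.
have w1 : \sum_(k < (n + n).+3) ww n c a1 a2 a3 k = 1.
  have dec := decomp c a1 a2 a3 z1 z2 z3 (fun _ => 1); simpl in dec.
  under eq_bigr do rewrite -[ww _ _ _ _ _ _]mulr1.
  rewrite dec.
  rewrite sumr_const card_ord /c -mulr_natr.
  have -> : (1 + 1) *+ n = (n + n)%:R :> R by rewrite -mulr_natr natrD; ring.
  by field; lra.
have := hg (dprob (ww n c a1 a2 a3) (zz z1 z2 z3) (n + n).+3) _.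
have hadm : admissible_error (dprob (ww n c a1 a2 a3) (zz z1 z2 z3) (n + n).+3).
  apply: adm_dprob => //.
  - move=> i.
    have dec := decomp c a1 a2 a3 z1 z2 z3 (fun p : 'cV[R]_n => p i 0);
      simpl in dec.
    rewrite dec big1 ?mulr0 ?add0r; last by move=> j _; rewrite !mxE subrr.
    by have := congr1 (fun M : 'cV[R]_n => M i 0) hm; rewrite !mxE.
  - move=> v hv.
    have dec := decomp c a1 a2 a3 z1 z2 z3 (fun p : 'cV[R]_n =>
          (\sum_(i < n) v i 0 * p i 0) ^+ 2); simpl in dec.
    rewrite dec.
    have [i0 hi0] : exists i0 : 'I_n, v i0 0 != 0.
      apply/existsP; move: hv; apply: contraR; rewrite negb_exists => /forallP h.
      apply/eqP/matrixP => i j; rewrite (ord1 j) mxE.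
      by move: (h i); rewrite negbK => /eqP.
    have hsum : 0 < \sum_(i < n) ((\sum_(j < n) v j 0 * (sp i : 'cV[R]_n) j 0) ^+ 2
        + (\sum_(j < n) v j 0 * (- (sp i : 'cV[R]_n)) j 0) ^+ 2).
      under eq_bigr => i _.
        under [X in _ + X ^+ 2]eq_bigr do rewrite mxE mulrN.
        rewrite sumrN sqrrN sp_dot.
      over.
      rewrite (bigD1 i0) //=.
      have hp : 0 < v i0 0 ^+ 2 by rewrite lt_def sqrf_eq0 hi0 sqr_ge0.
      have hr : 0 <= \sum_(i < n | i != i0) (v i 0 ^+ 2 + v i 0 ^+ 2).
        by apply: sumr_ge0 => i _; rewrite addr_ge0 // sqr_ge0.
      lra.
    have := mulr_gt0 c0 hsum.
    have := mulr_ge0 h1 (sqr_ge0 (\sum_(i < n) v i 0 * z1 i 0)).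
    have := mulr_ge0 h2 (sqr_ge0 (\sum_(i < n) v i 0 * z2 i 0)).
    have := mulr_ge0 h3 (sqr_ge0 (\sum_(i < n) v i 0 * z3 i 0)).
    lra.
have := hg _ hadm; rewrite dprob_int // decomp => /eqP; rewrite eqe => /eqP.
by [].
Qed.

Lemma lin_of_key {R : realType} {n : nat} (g : 'cV[R]_n -> R) :
  (0 < n)%N ->
  (forall (a1 a2 a3 : R) (z1 z2 z3 : 'cV[R]_n),
    0 <= a1 -> 0 <= a2 -> 0 <= a3 -> a1 + a2 + a3 < 1 ->
    a1 *: z1 + a2 *: z2 + a3 *: z3 = 0 ->
    (1 - a1 - a2 - a3) / (n + n)%:R * \sum_(i < n) (g (sp i) + g (- sp i))
    + a1 * g z1 + a2 * g z2 + a3 * g z3 = 0) ->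
  forall y, g y = \sum_(i < n) y i 0 * g (sp i).
Proof.
move=> n0 K.
set M := \sum_(i < n) (g (sp i) + g (- sp i)) in K.
have nn0 : 0 < (n + n)%:R :> R by rewrite ltr0n; lia.
have M0 : M = 0.
  have h01 : (0 : R) + 0 + 0 < 1 by rewrite !addr0 ltr01.
  have := K 0 0 0 0 0 0 (lexx _) (lexx _) (lexx _) h01.
  rewrite !scaler0 !addr0 !mul0r !addr0 !subr0 mul1r => /(_ erefl) /eqP.
  by rewrite mulf_eq0 invr_eq0 (gt_eqF nn0) /= => /eqP.
have K' : forall (a1 a2 a3 : R) (z1 z2 z3 : 'cV[R]_n),
    0 <= a1 -> 0 <= a2 -> 0 <= a3 -> a1 + a2 + a3 < 1 ->
    a1 *: z1 + a2 *: z2 + a3 *: z3 = 0 ->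
    a1 * g z1 + a2 * g z2 + a3 * g z3 = 0.
  move=> a1 a2 a3 z1 z2 z3 h1 h2 h3 hs hm.
  by have := K _ _ _ _ _ _ h1 h2 h3 hs hm; rewrite M0 mulr0 add0r.
have q0 : 0 <= 4^-1 :> R by rewrite invr_ge0.
have godd : forall y, g (- y) = - g y.
  move=> y; have := K' 4^-1 4^-1 0 y (- y) 0 q0 q0 (lexx _).
  rewrite scaler0 addr0 scalerN addrN mul0r addr0 => /(_ _ erefl).
  by move=> h; lra.
have g0 : g 0 = 0.
  by have := godd 0; rewrite oppr0 => h; lra.
have gadd : forall y1 y2, g (y1 + y2) = g y1 + g y2.
  move=> y1 y2; have := K' 4^-1 4^-1 4^-1 y1 y2 (- (y1 + y2)) q0 q0 q0.
  rewrite godd scalerN scalerDr addrN => /(_ _ erefl).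
  by move=> h; lra.
have ghom : forall s y, 0 < s -> g (s *: y) = s * g y.
  move=> s y s0; set t := (4 * (1 + s))^-1.
  have t0 : 0 < t by rewrite /t invr_gt0; lra.
  have ts : s * t + t = 4^-1 by rewrite /t; field; lra.
  have a0 : 0 <= s * t by rewrite mulr_ge0 // ltW.
  have b0 : 0 <= t by rewrite ltW.
  have c1 : s * t + t + 0 < 1 by rewrite addr0 ts; lra.
  have hm : (s * t) *: y + t *: (- (s *: y)) + 0 *: (0 : 'cV[R]_n) = 0.
    by rewrite scaler0 addr0 scalerN scalerA [t * s]mulrC addrN.
  have := K' (s * t) t 0 y (- (s *: y)) 0 a0 b0 (lexx _) c1 hm.
  rewrite mul0r addr0 godd => h.
  have : t * (s * g y - g (s *: y)) = 0 by rewrite -h; ring.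
  by move/eqP; rewrite mulf_eq0 (gt_eqF t0) /= subr_eq0 => /eqP.
have ghom' : forall s y, g (s *: y) = s * g y.
  move=> s y; case: (ltgtP s 0) => hs.
  - rewrite -[s]opprK scaleNr godd ghom ?oppr_gt0 //; ring.
  - exact: ghom.
  - by rewrite hs scale0r g0 mul0r.
move=> y; rewrite {1}(sp_sum y).
rewrite (big_morph g gadd g0); apply: eq_bigr => i _.
exact: ghom'.
Qed.

Theorem theorem3p4 (R : realType) (n k : nat) (X : 'M[R]_(n, k))
  (hk1 : (1 <= k)%N) (hkn : (k < n)%N) (hX : \rank X = k)
  (bhat : 'cV[R]_n -> 'cV[R]_k)
  (hmeas : measurable_fun [set: Rvec R n] (bhat : Rvec R n -> Rvec R k))
  (hunb : forall (beta : 'cV[R]_k) (Pe : probability (Rvec R n) R),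
      admissible_error Pe ->
      forall j : 'I_k,
        Pe.-integrable [set: Rvec R n]
          (fun e : Rvec R n => (bhat (X *m beta + e) j 0)%:E) /\
        (\int[Pe]_e (bhat (X *m beta + e) j 0)%:E
           = (beta j 0)%:E)%E) :
  exists A : 'M[R]_(k, n), forall y : 'cV[R]_n, bhat y = A *m y.
Proof.
have n0 : (0 < n)%N by lia.
have lin : forall j : 'I_k, forall y : 'cV[R]_n,
    bhat y j 0 = \sum_(i < n) y i 0 * bhat (sp i) j 0.
  move=> j; apply: (lin_of_key (fun y : 'cV[R]_n => bhat y j 0)) => //.
  apply: key => //.
    exact: (measurableT_comp (coord_meas _ _ j) hmeas).
  move=> P hP; have := (hunb 0 P hP j).2.
  under eq_integral do rewrite mulmx0 add0r.
  by rewrite mxE.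
exists (\matrix_(j, i) bhat (sp i) j 0) => y.
apply/matrixP => j l; rewrite (ord1 l) lin !mxE.
by apply: eq_bigr => i _; rewrite mxE mulrC.
Qed.
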